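(* Let $(X,d)$ be a compact metric space with at least two points and $f_{1,\infty}$ a finitely generated commutative sequence of continuous surjective self-maps of $X$. If $(X,f_{1,\infty})$ is weakly mixing, then it is thickly sensitive.
   Context: Finitely generated: there is a finite set $F$ of continuous self-maps of $X$ with $f_i\in F$ for all $i$. Commutative: $f_i\circ f_j=f_j\circ f_i$ for all $i,j$. Write $f_1^n=f_n\circ\cdots\circ f_1$. Weakly mixing: for all non-empty open $U_1,U_2,V_1,V_2$ there is $n$ with $f_1^n(U_i)\cap V_i\ne\emptyset$, $i=1,2$. For open $U$ and $\delta>0$, $N_{f_{1,\infty}}(U,\delta)=\{n\in\mathbb{N}:\exists x,y\in U,\ d(f_1^n(x),f_1^n(y))>\delta\}$. A set $T\subseteq\mathbb{N}$ is thick if for every $p\in\mathbb{N}$ there is $n$ with $\{n,n+1,\dots,n+p\}\subseteq T$. Thickly sensitive: there is $\delta>0$ such that $N_{f_{1,\infty}}(U,\delta)$ is thick for every non-empty open $U\subseteq X$. *)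

(* Defs.v *)
From Stdlib Require Import Reals List.
Open Scope R_scope.

Definition is_metric {X : Type} (d : X -> X -> R) : Prop :=
  (forall x y, 0 <= d x y) /\
  (forall x y, d x y = 0 <-> x = y) /\
  (forall x y, d x y = d y x) /\
  (forall x y z, d x z <= d x y + d y z).

Definition ball {X : Type} (d : X -> X -> R) (x : X) (r : R) : X -> Prop :=
  fun y => d x y < r.

Definition is_open {X : Type} (d : X -> X -> R) (U : X -> Prop) : Prop :=
  forall x, U x -> exists eps, 0 < eps /\ forall y, ball d x eps y -> U y.

Definition nonempty {X : Type} (U : X -> Prop) : Prop := exists x, U x.

Definition is_compact {X : Type} (d : X -> X -> R) : Prop :=
  forall (I : Type) (U : I -> X -> Prop),
    (forall i, is_open d (U i)) ->
    (forall x, exists i, U i x) ->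
    exists l : list I, forall x, exists i, In i l /\ U i x.

Definition continuous_map {X : Type} (d : X -> X -> R) (g : X -> X) : Prop :=
  forall x eps, 0 < eps ->
    exists delta, 0 < delta /\ forall y, d x y < delta -> d (g x) (g y) < eps.

Definition surjective_map {X : Type} (g : X -> X) : Prop :=
  forall y, exists x, g x = y.

(* Indexing convention: f k stands for f_{k+1}, so the sequence f_1, f_2, ...
   is f 0, f 1, ....  comp_seq f n = f_n o ... o f_1  (= f_1^n), comp_seq f 0 = id. *)
Fixpoint comp_seq {X : Type} (f : nat -> X -> X) (n : nat) : X -> X :=
  match n with
  | O => fun x => x
  | S m => fun x => f m (comp_seq f m x)
  end.

Definition finitely_generated {X : Type} (d : X -> X -> R) (f : nat -> X -> X) : Prop :=
  exists F : list (X -> X),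
    (forall g, In g F -> continuous_map d g) /\ (forall i, In (f i) F).

Definition commutative_seq {X : Type} (f : nat -> X -> X) : Prop :=
  forall i j x, f i (f j x) = f j (f i x).

Definition weakly_mixing {X : Type} (d : X -> X -> R) (f : nat -> X -> X) : Prop :=
  forall U1 U2 V1 V2 : X -> Prop,
    is_open d U1 -> is_open d U2 -> is_open d V1 -> is_open d V2 ->
    nonempty U1 -> nonempty U2 -> nonempty V1 -> nonempty V2 ->
    exists n, (1 <= n)%nat /\
      (exists x, U1 x /\ V1 (comp_seq f n x)) /\
      (exists x, U2 x /\ V2 (comp_seq f n x)).

Definition sens_set {X : Type} (d : X -> X -> R) (f : nat -> X -> X)
    (U : X -> Prop) (delta : R) : nat -> Prop :=
  fun n => (1 <= n)%nat /\
    exists x y, U x /\ U y /\ d (comp_seq f n x) (comp_seq f n y) > delta.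

Definition thick (T : nat -> Prop) : Prop :=
  forall p : nat, exists n : nat, forall k, (k <= p)%nat -> T (n + k)%nat.

Definition thickly_sensitive {X : Type} (d : X -> X -> R) (f : nat -> X -> X) : Prop :=
  exists delta, 0 < delta /\
    forall U : X -> Prop, is_open d U -> nonempty U -> thick (sens_set d f U delta).

(* Main.v *)
Require Import Defs.
From Stdlib Require Import Reals List Classical Lia Lra.
Import ListNotations.
Open Scope R_scope.

Section S.
Variable X : Type.
Variable d : X -> X -> R.

Lemma open_pre (U : X -> Prop) (g : X -> X) :
  is_open d U -> continuous_map d g -> is_open d (fun x => U (g x)).
Proof.
  intros HU Hg x Hx. destruct (HU _ Hx) as [e [He H]].
  destruct (Hg x e He) as [dl [Hd H2]]. exists dl; split; auto.
  intros y Hy. apply H. apply H2. exact Hy.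
Qed.

Lemma open_inter (U V : X -> Prop) :
  is_open d U -> is_open d V -> is_open d (fun x => U x /\ V x).
Proof.
  intros HU HV x [Hx1 Hx2]. destruct (HU _ Hx1) as [e1 [He1 H1]].
  destruct (HV _ Hx2) as [e2 [He2 H2]]. exists (Rmin e1 e2). split.
  - apply Rmin_glb_lt; auto.
  - intros y Hy. unfold ball in *. split.
    + apply H1. unfold ball. pose proof (Rmin_l e1 e2). lra.
    + apply H2. unfold ball. pose proof (Rmin_r e1 e2). lra.
Qed.

Lemma open_ball (a : X) r : is_metric d -> is_open d (ball d a r).
Proof.
  intros [H0 [H1 [H2 H3]]] y Hy. unfold ball in *. exists (r - d a y). split. lra.
  intros z Hz. pose proof (H3 a y z). lra.
Qed.

Lemma cont_comp (g h : X -> X) : continuous_map d g -> continuous_map d h ->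
  continuous_map d (fun x => g (h x)).
Proof.
  intros Hg Hh x e He. destruct (Hg (h x) e He) as [e1 [He1 H1]].
  destruct (Hh x e1 He1) as [e2 [He2 H2]]. exists e2; split; auto.
Qed.

Lemma cont_id : continuous_map d (fun x => x).
Proof. intros x e He. exists e; split; auto. Qed.

Lemma cont_seq (f : nat -> X -> X) : (forall i, continuous_map d (f i)) ->
  forall m, continuous_map d (comp_seq f m).
Proof.
  intros Hf m. induction m; simpl. apply cont_id. apply cont_comp; auto.
Qed.

Lemma comm1 (f : nat -> X -> X) : commutative_seq f ->
  forall i m x, f i (comp_seq f m x) = comp_seq f m (f i x).
Proof.
  intros Hc i m. induction m; intro x; simpl; auto.
  rewrite Hc. rewrite IHm. reflexivity.
Qed.

Lemma comm2 (f : nat -> X -> X) : commutative_seq f ->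
  forall n m x, comp_seq f n (comp_seq f m x) = comp_seq f m (comp_seq f n x).
Proof.
  intros Hc n. induction n; intros m x; simpl; auto.
  rewrite IHn. apply comm1; auto.
Qed.

Definition goodP (P : (X -> Prop) * (X -> Prop)) :=
  is_open d (fst P) /\ is_open d (snd P) /\ nonempty (fst P) /\ nonempty (snd P).

Lemma multi (f : nat -> X -> X) : is_metric d -> (forall i, continuous_map d (f i)) ->
  commutative_seq f -> weakly_mixing d f ->
  forall l P, (forall Q, In Q (P :: l) -> goodP Q) ->
  exists n, (1 <= n)%nat /\ forall Q, In Q (P :: l) ->
     exists x, fst Q x /\ snd Q (comp_seq f n x).
Proof.
  intros Hm Hf Hc Hw l. induction l as [|P2 l IH]; intros P HP.
  - destruct (HP P (or_introl eq_refl)) as [A1 [A2 [A3 A4]]].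
    destruct (Hw _ _ _ _ A1 A1 A2 A2 A3 A3 A4 A4) as [n [Hn [H1 _]]].
    exists n; split; auto. intros Q [<-|[]]; auto.
  - destruct (HP P (or_introl eq_refl)) as [A1 [A2 [A3 A4]]].
    destruct (HP P2 (or_intror (or_introl eq_refl))) as [B1 [B2 [B3 B4]]].
    destruct (Hw _ _ _ _ A1 A2 B1 B2 A3 A4 B3 B4) as [m [Hm1 [[x [Hx1 Hx2]] [y [Hy1 Hy2]]]]].
    set (P3 := ((fun z => fst P z /\ fst P2 (comp_seq f m z)),
                (fun z => snd P z /\ snd P2 (comp_seq f m z)))).
    destruct (IH P3) as [n [Hn H]].
    + intros Q [<-|HQ].
      * unfold goodP; simpl. split; [|split; [|split]].
        -- apply open_inter; auto. apply open_pre; auto. apply cont_seq; auto.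
        -- apply open_inter; auto. apply open_pre; auto. apply cont_seq; auto.
        -- exists x; split; auto.
        -- exists y; split; auto.
      * apply HP. simpl; auto.
    + exists n; split; auto. intros Q [<-|[<-|HQ]].
      * destruct (H P3 (or_introl eq_refl)) as [z [[Hz1 Hz2] [Hz3 Hz4]]]. exists z; auto.
      * destruct (H P3 (or_introl eq_refl)) as [z [[Hz1 Hz2] [Hz3 Hz4]]].
        exists (comp_seq f m z). split; auto. rewrite comm2; auto.
      * apply H. simpl; auto.
Qed.

Fixpoint words (Fs : list (X -> X)) (k : nat) : list (X -> X) :=
  match k with
  | O => [fun x => x]
  | S k => flat_map (fun h => map (fun s => fun x => s (h x)) Fs) (words Fs k)
  end.

Fixpoint upto (Fs : list (X -> X)) (p : nat) : list (X -> X) :=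
  match p with
  | O => words Fs 0
  | S p => words Fs (S p) ++ upto Fs p
  end.

Lemma words_in Fs (g : nat -> X -> X) : (forall i, In (g i) Fs) ->
  forall k, In (comp_seq g k) (words Fs k).
Proof.
  intros Hg k. induction k; simpl. left; reflexivity.
  apply in_flat_map. exists (comp_seq g k). split; auto.
  apply in_map_iff. exists (g k). split; auto.
Qed.

Lemma upto_in Fs h p k : (k <= p)%nat -> In h (words Fs k) -> In h (upto Fs p).
Proof.
  induction p; intros Hk Hh.
  - assert (k = 0%nat) by lia. subst. exact Hh.
  - simpl upto. apply in_or_app. destruct (Nat.eq_dec k (S p)).
    + subst. left. exact Hh.
    + right. apply IHp; auto. lia.
Qed.

Lemma words_prop Fs : (forall g, In g Fs -> continuous_map d g /\ surjective_map g) ->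
  forall k h, In h (words Fs k) -> continuous_map d h /\ surjective_map h.
Proof.
  intros HF k. induction k; simpl; intros h Hh.
  - destruct Hh as [<-|[]]. split. apply cont_id. intro y; exists y; auto.
  - apply in_flat_map in Hh. destruct Hh as [h1 [H1 H2]].
    apply in_map_iff in H2. destruct H2 as [s [<- Hs]].
    destruct (IHk h1 H1) as [C1 S1]. destruct (HF s Hs) as [C2 S2].
    split. apply cont_comp; auto.
    intro y. destruct (S2 y) as [z Hz]. destruct (S1 z) as [w Hw].
    exists w. rewrite Hw; auto.
Qed.

Lemma upto_prop Fs : (forall g, In g Fs -> continuous_map d g /\ surjective_map g) ->
  forall p h, In h (upto Fs p) -> continuous_map d h /\ surjective_map h.
Proof.
  intros HF p. induction p; simpl; intros h Hh.
  - eapply (words_prop Fs HF 0). exact Hh.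
  - apply in_app_or in Hh. destruct Hh as [Hh|Hh]; auto.
    eapply (words_prop Fs HF (S p)). exact Hh.
Qed.

End S.

Lemma filterP {A} (P : A -> Prop) (l : list A) :
  exists l', forall x, In x l' <-> In x l /\ P x.
Proof.
  induction l as [|a l [l' H]].
  - exists []. simpl. tauto.
  - destruct (classic (P a)) as [Ha|Ha].
    + exists (a :: l'). intro x. simpl. rewrite H. split.
      * intros [<-|[]]; auto.
      * intros [[<-|]]; auto.
    + exists l'. intro x. simpl. rewrite H. split.
      * intros []; auto.
      * intros [[<-|] ]; tauto.
Qed.

Lemma comp_shift {X} (f : nat -> X -> X) n k x :
  comp_seq f (n + k) x = comp_seq (fun i => f (n + i)%nat) k (comp_seq f n x).
Proof.
  induction k; simpl. rewrite Nat.add_0_r; auto.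
  rewrite Nat.add_succ_r. simpl. rewrite IHk. reflexivity.
Qed.

Theorem mainTheorem14 (X : Type) (d : X -> X -> R) (f : nat -> X -> X) :
  is_metric d ->
  is_compact d ->
  (exists x y : X, x <> y) ->
  finitely_generated d f ->
  commutative_seq f ->
  (forall i, continuous_map d (f i)) ->
  (forall i, surjective_map (f i)) ->
  weakly_mixing d f ->
  thickly_sensitive d f.
Proof.
  intros Hm _ [a [b Hab]] [F [HF1 HF2]] Hc Hf Hs Hw.
  pose proof Hm as [M0 [M1 [M2 M3]]].
  set (D := d a b).
  assert (HD : 0 < D).
  { destruct (M0 a b) as [|E]; auto. exfalso. apply Hab. apply M1. exact (eq_sym E). }
  destruct (filterP (fun g => surjective_map g) F) as [Fs HFs].
  assert (HFsp : forall g, In g Fs -> continuous_map d g /\ surjective_map g).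
  { intros g Hg. apply HFs in Hg. destruct Hg; split; auto. }
  assert (HfF : forall i, In (f i) Fs). { intro i. apply HFs. auto. }
  exists (D / 4). split. lra.
  intros U HU HUn p.
  set (Hs' := upto X Fs p).
  set (LL := flat_map (fun h => [(U, fun z => ball d a (D/3) (h z));
                                 (U, fun z => ball d b (D/3) (h z))]) Hs').
  assert (Hg : forall Q, In Q ((U, U) :: LL) -> goodP X d Q).
  { intros Q [<-|HQ].
    - repeat split; auto.
    - apply in_flat_map in HQ. destruct HQ as [h [Hh HQ]].
      destruct (upto_prop X d Fs HFsp p h Hh) as [Ch Sh].
      destruct HQ as [<-|[<-|[]]]; repeat split; simpl; auto.
      + apply open_pre; auto. apply open_ball; auto.
      + destruct (Sh a) as [z Hz]. exists z. unfold ball. rewrite Hz.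
        assert (d a a = 0) by (apply M1; auto). lra.
      + apply open_pre; auto. apply open_ball; auto.
      + destruct (Sh b) as [z Hz]. exists z. unfold ball. rewrite Hz.
        assert (d b b = 0) by (apply M1; auto). lra. }
  destruct (multi X d f Hm Hf Hc Hw LL (U, U) Hg) as [n [Hn H]].
  exists n. intros k Hk. split. lia.
  set (h := comp_seq (fun i => f (n + i)%nat) k).
  assert (Hh : In h Hs').
  { apply (upto_in X Fs h p k Hk). apply words_in. intro i. apply HfF. }
  destruct (H (U, fun z => ball d a (D/3) (h z))) as [x [Hx1 Hx2]].
  { right. apply in_flat_map. exists h. split; simpl; auto. }
  destruct (H (U, fun z => ball d b (D/3) (h z))) as [y [Hy1 Hy2]].
  { right. apply in_flat_map. exists h. split; simpl; auto. }
  simpl in *. exists x, y. split; auto. split; auto.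
  rewrite !comp_shift. fold h. unfold ball in *.
  pose proof (M3 a (h (comp_seq f n x)) b).
  pose proof (M3 (h (comp_seq f n x)) (h (comp_seq f n y)) b).
  rewrite (M2 (h (comp_seq f n y)) b) in *.
  unfold D in *. lra.
Qed.
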